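(* Let $k$ be a field, $D$ a $k$-algebra, $\sigma$ an automorphism of $D$, $a$ a central element of $D$, $A=D(x,y;\sigma,a)$ the generalized Weyl algebra, $m\geq1$ an integer, and $B$ the subalgebra of $A$ generated by $D\cup\{x^m,y^m\}$. Put $b=\sigma^{-(m-1)}(a)\sigma^{-(m-2)}(a)\cdots\sigma^{-1}(a)a$. Then $b$ is central in $D$, $B$ is the generalized Weyl algebra $D(x^m,y^m;\sigma^m,b)$ (with $x^m,y^m$ playing the roles of its canonical generators), and $\operatorname{GKdim}(A)=\operatorname{GKdim}(B)$.
   Context: $D(x,y;\sigma,a)$ denotes the algebra generated by $D$ and indeterminates $x,y$ subject to $xd=\sigma(d)x$, $yd=\sigma^{-1}(d)y$ for all $d\in D$, $yx=a$, $xy=\sigma(a)$. $\operatorname{GKdim}(C)=\sup_V\limsup_{n\to\infty}\log_n\dim_k(\sum_{i=0}^nV^i)$ over finite-dimensional subspaces $V$ of $C$. *)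

(* Defs.v *)
From HB Require Import structures.
From mathcomp Require Import all_boot all_order all_algebra.
From mathcomp Require Import all_classical all_reals all_analysis.
Set Implicit Arguments. Unset Strict Implicit. Unset Printing Implicit Defensive.
Import Order.TTheory GRing.Theory Num.Theory.
Local Open Scope ring_scope.

Section GWA.
Variable k : fieldType.

(* Relations of D(x,y;s,a) inside A, where iota : D -> A is the structure map,
   s an automorphism of D with inverse s'. *)
Definition gwa_relations (D A : algType k) (iota : D -> A) (s s' : D -> D)
    (a : D) (x y : A) : Prop :=
  [/\ forall d, x * iota d = iota (s d) * x,
      forall d, y * iota d = iota (s' d) * y,
      y * x = iota a
    & x * y = iota (s a)].

(* (A, iota, x, y) is THE generalized Weyl algebra D(x,y;s,a): the k-algebra
   generated by D and x, y subject to the relations, i.e. it is initial among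
   k-algebras receiving a k-algebra map from D and two elements satisfying
   the relations. *)
Definition is_GWA (D A : algType k) (iota : {lrmorphism D -> A})
    (s s' : D -> D) (a : D) (x y : A) : Prop :=
  gwa_relations iota s s' a x y /\
  forall (C : algType k) (phi : {lrmorphism D -> C}) (X Y : C),
    gwa_relations phi s s' a X Y ->
    exists f : {lrmorphism A -> C},
      [/\ forall d, f (iota d) = phi d, f x = X, f y = Y &
          forall g : {lrmorphism A -> C},
            (forall d, g (iota d) = phi d) -> g x = X -> g y = Y ->
            forall z, g z = f z].

Definition subalg_closed (A : algType k) (S : A -> Prop) : Prop :=
  [/\ S 1, (forall u v, S u -> S v -> S (u + v)),
      (forall u v, S u -> S v -> S (u * v)) &
      (forall (c : k) u, S u -> S (c *: u))].

Definition gen_subalg (A : algType k) (G : A -> Prop) : A -> Prop :=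
  fun z => forall S : A -> Prop, subalg_closed S -> (forall g, G g -> S g) -> S z.

Definition spanned (A : algType k) (s : seq A) (z : A) : Prop :=
  exists c : 'I_(size s) -> k, z = \sum_(i < size s) c i *: s`_i.

Lemma fdim_ex (A : algType k) (s : seq A) :
  exists n, `[< exists t : seq A, size t = n /\
                 forall z, spanned s z <-> spanned t z >].
Proof. by exists (size s); apply/asboolP; exists s. Qed.

(* dimension of the span of s = least size of a spanning family *)
Definition fdim (A : algType k) (s : seq A) : nat := ex_minn (fdim_ex s).

Fixpoint words (A : Type) (vs : seq A) (i : nat) : seq (seq A) :=
  if i is i'.+1 then [seq v :: w | v <- vs, w <- words vs i'] else [:: [::]].

(* a spanning family of V^0 + V^1 + ... + V^n, where V = span vs *)
Definition powfam (A : algType k) (vs : seq A) (n : nat) : seq A :=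
  [seq foldr *%R 1 w | w <- flatten [seq words vs i | i <- iota 0 n.+1]].

Definition growth (A : algType k) (vs : seq A) (n : nat) : nat :=
  fdim (powfam vs n).

Definition GKdim_on (R : realType) (A : algType k) (S : A -> Prop) : \bar R :=
  ereal_sup [set limn_esup (fun n : nat =>
                 ((ln ((growth vs n)%:R : R) / ln (n%:R : R))%:E))
            | vs in [set vs : seq A | forall v, v \in vs -> S v]].

Definition GKdim (R : realType) (A : algType k) : \bar R :=
  GKdim_on R (fun _ : A => True).

End GWA.

(* Main.v *)
Require Import Defs.
From HB Require Import structures.
From mathcomp Require Import all_boot all_order all_algebra.
From mathcomp Require Import all_classical all_reals all_analysis.
From mathcomp Require Import lra zify.
Set Implicit Arguments. Unset Strict Implicit. Unset Printing Implicit Defensive.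
Import Order.TTheory GRing.Theory Num.Theory.
Local Open Scope ring_scope.
Notation Mt D := ({poly D} * {poly D})%type.
Section EndAlg.
Variables (k : fieldType) (D : algType k).
Definition ks (c : k) (v : Mt D) : Mt D := ((c *: 1)%:P * v.1, (c *: 1)%:P * v.2).

Lemma ks0 c : ks c 0 = 0.
Proof. by rewrite /ks /= !mulr0. Qed.
Lemma ksD c u v : ks c (u + v) = ks c u + ks c v.
Proof. by rewrite /ks /= !mulrDr. Qed.
Lemma ksN c u : ks c (- u) = - ks c u.
Proof. by rewrite /ks /= !mulrN. Qed.
Lemma ksA c1 c2 u : ks (c1 * c2) u = ks c1 (ks c2 u).
Proof.
have E : (c1 * c2) *: (1 : D) = (c1 *: 1) * (c2 *: 1) by rewrite -scalerAl mul1r scalerA.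
by rewrite /ks /= E polyCM !mulrA.
Qed.
Lemma ks1 u : ks 1 u = u.
Proof. by case: u => p q; rewrite /ks /= scale1r !mul1r. Qed.
Lemma ksDl c1 c2 u : ks (c1 + c2) u = ks c1 u + ks c2 u.
Proof. by rewrite /ks /= scalerDl polyCD !mulrDl. Qed.

Record endo := Endo { ef :> Mt D -> Mt D;
  ef_add : forall u v, ef (u + v) = ef u + ef v;
  ef_ks : forall c u, ef (ks c u) = ks c (ef u) }.

HB.instance Definition _ := gen_eqMixin endo.
HB.instance Definition _ := gen_choiceMixin endo.

Lemma endoP (f g : endo) : f =1 g -> f = g.
Proof.
case: f g => f1 f2 f3 [g1 g2 g3] /= /funext E; subst.
by congr Endo; apply: Prop_irrelevance.
Qed.

Lemma ef0 (f : endo) : f 0 = 0.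
Proof. by apply: (addrI (f 0)); rewrite addr0 -ef_add addr0. Qed.
Lemma efN (f : endo) u : f (- u) = - f u.
Proof. by apply: (addrI (f u)); rewrite -ef_add !subrr ef0. Qed.

Definition e0 : endo := @Endo (fun _ => 0) (fun _ _ => esym (addr0 0)) (fun c _ => esym (ks0 c)).
Definition eD (f g : endo) : endo.
Proof.
refine (@Endo (fun v => f v + g v) _ _).
- by move=> u v; rewrite !ef_add addrACA.
- by move=> c u; rewrite !ef_ks ksD.
Defined.
Definition eN (f : endo) : endo.
Proof.
refine (@Endo (fun v => - f v) _ _).
- by move=> u v; rewrite ef_add opprD.
- by move=> c u; rewrite ef_ks ksN.
Defined.
Definition e1 : endo := @Endo id (fun _ _ => erefl) (fun _ _ => erefl).
Definition eM (f g : endo) : endo.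
Proof.
refine (@Endo (fun v => f (g v)) _ _).
- by move=> u v; rewrite !ef_add.
- by move=> c u; rewrite !ef_ks.
Defined.
Definition eZ (c : k) (f : endo) : endo.
Proof.
refine (@Endo (fun v => ks c (f v)) _ _).
- by move=> u v; rewrite ef_add ksD.
- by move=> c' u; rewrite ef_ks -!ksA mulrC.
Defined.

Lemma eDA : associative eD. Proof. by move=> f g h; apply: endoP => v /=; rewrite addrA. Qed.
Lemma eDC : commutative eD. Proof. by move=> f g; apply: endoP => v /=; rewrite addrC. Qed.
Lemma e0D : left_id e0 eD. Proof. by move=> f; apply: endoP => v /=; rewrite add0r. Qed.
Lemma eND : left_inverse e0 eN eD. Proof. by move=> f; apply: endoP => v /=; rewrite addNr. Qed.

HB.instance Definition _ := GRing.isZmodule.Build endo eDA eDC e0D eND.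

Lemma eMA : associative eM. Proof. by move=> f g h; apply: endoP. Qed.
Lemma e1M : left_id e1 eM. Proof. by move=> f; apply: endoP. Qed.
Lemma eM1 : right_id e1 eM. Proof. by move=> f; apply: endoP. Qed.
Lemma eMDl : left_distributive eM eD. Proof. by move=> f g h; apply: endoP. Qed.
Lemma eMDr : right_distributive eM eD.
Proof. by move=> f g h; apply: endoP => v /=; rewrite ef_add. Qed.
Lemma e1_neq0 : e1 != e0.
Proof.
apply/eqP => /(congr1 (fun f : endo => f (1, 0))) /= [] /eqP.
by rewrite oner_eq0.
Qed.

HB.instance Definition _ := GRing.Zmodule_isNzRing.Build endo eMA e1M eM1 eMDl eMDr e1_neq0.

Lemma eZA c1 c2 f : eZ c1 (eZ c2 f) = eZ (c1 * c2) f.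
Proof. by apply: endoP => v /=; rewrite ksA. Qed.
Lemma eZ1 : left_id 1 eZ. Proof. by move=> f; apply: endoP => v /=; rewrite ks1. Qed.
Lemma eZDr : right_distributive eZ +%R. Proof. by move=> c f g; apply: endoP => v /=; rewrite ksD. Qed.
Lemma eZDl f : {morph eZ^~ f : c1 c2 / c1 + c2}.
Proof. by move=> c1 c2; apply: endoP => v /=; rewrite ksDl. Qed.

HB.instance Definition _ := GRing.Zmodule_isLmodule.Build k endo eZA eZ1 eZDr eZDl.

Lemma eZAl c (f g : endo) : c *: (f * g) = (c *: f) * g.
Proof. by apply: endoP. Qed.
HB.instance Definition _ := GRing.Lmodule_isLalgebra.Build k endo eZAl.
Lemma eZAr c (f g : endo) : c *: (f * g) = f * (c *: g).
Proof. by apply: endoP => v /=; rewrite ef_ks. Qed.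
HB.instance Definition _ := GRing.Lalgebra_isAlgebra.Build k endo eZAr.

Lemma endoDE (f g : endo) v : (f + g) v = f v + g v. Proof. by []. Qed.
Lemma endoME (f g : endo) v : (f * g) v = f (g v). Proof. by []. Qed.
Lemma endo1E v : (1 : endo) v = v. Proof. by []. Qed.
Lemma endo0E v : (0 : endo) v = 0. Proof. by []. Qed.
Lemma endoZE c (f : endo) v : (c *: f) v = ks c (f v). Proof. by []. Qed.
Check (endo : algType k).
End EndAlg.

Section GenSub.
Variables (k : fieldType) (A : algType k) (G : A -> Prop).
Definition gP : pred A := fun z => `[< gen_subalg G z >].

Lemma gP_closed : GRing.subsemialg_closed gP.
Proof.
split.
- by apply/asboolP => S [].
- split; first by apply/asboolP => S [S1 _ _ SZ] _; rewrite -(scale0r 1); exact: SZ.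
  move=> u v /asboolP Hu /asboolP Hv; apply/asboolP => S HS HG.
  by case: HS (HS) => _ SD _ _ HS; apply: SD; [apply: Hu|apply: Hv].
- move=> c u /asboolP Hu; apply/asboolP => S HS HG.
  by case: HS (HS) => _ _ _ SZ HS; apply: SZ; apply: Hu.
- move=> u v /asboolP Hu /asboolP Hv; apply/asboolP => S HS HG.
  by case: HS (HS) => _ _ SM _ HS; apply: SM; [apply: Hu|apply: Hv].
Qed.

Record gsub := GSub { gval : A ; gvalP : gP gval }.
HB.instance Definition _ := [isSub for gval].
HB.instance Definition _ := [Choice of gsub by <:].
HB.instance Definition _ := GRing.SubChoice_isSubAlgebra.Build k A gP gsub gP_closed.

Lemma gsub_alg : (gsub : algType k) = gsub :> Type. Proof. by []. Qed.
Definition gvalL : {lrmorphism gsub -> A} :=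
  HB.pack (val : gsub -> A) (GRing.isZmodMorphism.Build _ _ _ (@GRing.valB _ _ _))
    (GRing.isMonoidMorphism.Build _ _ _ (GRing.valM1 _))
    (GRing.isScalable.Build _ _ _ _ _ (@GRing.valZ _ _ _ _)).
End GenSub.
Arguments gsub {k A} G. Arguments gP {k A} G. Arguments GSub {k A G} gval gvalP.
Arguments gvalL {k A} G. Arguments gval {k A G}.

Section Gen.
Variables (k : fieldType) (D A : algType k) (iota : {lrmorphism D -> A})
  (s s' : D -> D) (a : D) (x y : A) (HA : is_GWA iota s s' a x y).

Definition gwaG (z : A) : Prop := (exists d, z = iota d) \/ z = x \/ z = y.

Lemma gwa_gen z : gen_subalg gwaG z.
Proof.
case: HA => [[R1 R2 R3 R4] U].
have Pd d : gP gwaG (iota d) by apply/asboolP => S _ HG; apply: HG; left; exists d.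
have Px : gP gwaG x by apply/asboolP => S _ HG; apply: HG; right; left.
have Py : gP gwaG y by apply/asboolP => S _ HG; apply: HG; right; right.
pose phi (d : D) : gsub gwaG := GSub _ (Pd d).
have phiA : zmod_morphism phi.
  by move=> u v; apply: val_inj; rewrite /= raddfB.
have phiM : monoid_morphism phi.
  by split; [apply: val_inj; rewrite /= rmorph1 | move=> u v; apply: val_inj; rewrite /= rmorphM].
have phiZ : scalable phi.
  by move=> c u; apply: val_inj; rewrite /= linearZ.
pose phiL : {lrmorphism D -> gsub gwaG} :=
  HB.pack phi (GRing.isZmodMorphism.Build _ _ _ phiA)
     (GRing.isMonoidMorphism.Build _ _ _ phiM) (GRing.isScalable.Build _ _ _ _ _ phiZ).
pose X : gsub gwaG := GSub _ Px.
pose Y : gsub gwaG := GSub _ Py.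
have rel : gwa_relations phiL s s' a X Y.
  split.
  - by move=> d; apply: val_inj; rewrite /= R1.
  - by move=> d; apply: val_inj; rewrite /= R2.
  - by apply: val_inj; rewrite /= R3.
  - by apply: val_inj; rewrite /= R4.
have [h [h1 h2 h3 _]] := U _ phiL X Y rel.
have [f0 [f1 f2 f3 f4]] := U _ iota x y (And4 R1 R2 R3 R4).
pose g : {lrmorphism A -> A} := (gvalL gwaG \o h).
have E1 := f4 g (fun d => congr1 val (h1 d)) (congr1 val h2) (congr1 val h3).
have E2 := f4 idfun (fun d => erefl) (erefl) (erefl).
have : gP gwaG (g z) by exact: gvalP.
by rewrite E1 -E2 => /asboolP.
Qed.
End Gen.

Section Model.
Variables (k : fieldType) (D : algType k) (s : {lrmorphism D -> D}) (s' : D -> D)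
  (Hs1 : cancel s s') (Hs2 : cancel s' s) (a : D) (Ha : forall d, a * d = d * a).

Lemma s'D u v : s' (u + v) = s' u + s' v.
Proof. by rewrite -{1}(Hs2 u) -{1}(Hs2 v) -rmorphD Hs1. Qed.
Lemma s'0 : s' 0 = 0.
Proof. by rewrite -{1}(raddf0 s) Hs1. Qed.
Lemma s'M u v : s' (u * v) = s' u * s' v.
Proof. by rewrite -{1}(Hs2 u) -{1}(Hs2 v) -rmorphM Hs1. Qed.
Lemma s'1 : s' 1 = 1.
Proof. by rewrite -{1}(rmorph1 s) Hs1. Qed.
Lemma s'Z c u : s' (c *: u) = c *: s' u.
Proof. by rewrite -{1}(Hs2 u) -linearZ Hs1. Qed.
Lemma s'nat (b : bool) : s' b%:R = b%:R.
Proof. by case: b; rewrite ?s'1 ?s'0. Qed.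
Lemma sa_c d : s a * d = d * s a.
Proof. by rewrite -[d]Hs2 -!rmorphM Ha. Qed.

Definition Ldf (d : D) (v : Mt D) : Mt D := (d%:P * v.1, d%:P * v.2).
Definition Lxf (v : Mt D) : Mt D :=
  (\poly_(i < (size v.1).+1) (if i is j.+1 then s (v.1`_j) else s (v.2`_0 * a)),
   \poly_(i < size v.2) s (v.2`_i.+1 * a)).
Definition Lyf (v : Mt D) : Mt D :=
  (\poly_(i < size v.1) (s' (v.1`_i.+1) * a),
   \poly_(i < (size v.2).+1) (if i is j.+1 then s' (v.2`_j) else s' (v.1`_0))).

Arguments Ldf : simpl never. Arguments Lxf : simpl never. Arguments Lyf : simpl never.
Lemma Ld1c d v i : (Ldf d v).1`_i = d * v.1`_i. Proof. by rewrite coefCM. Qed.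
Lemma Ld2c d v i : (Ldf d v).2`_i = d * v.2`_i. Proof. by rewrite coefCM. Qed.
Lemma Lx1c v i : (Lxf v).1`_i = if i is j.+1 then s (v.1`_j) else s (v.2`_0 * a).
Proof.
rewrite coef_poly; case: ltnP => // H; case: i H => [|j] //= H.
by rewrite nth_default ?raddf0.
Qed.
Lemma Lx2c v i : (Lxf v).2`_i = s (v.2`_i.+1 * a).
Proof.
rewrite coef_poly; case: ltnP => // H.
by rewrite nth_default ?mul0r ?raddf0 // (leq_trans H).
Qed.
Lemma Ly1c v i : (Lyf v).1`_i = s' (v.1`_i.+1) * a.
Proof.
rewrite coef_poly; case: ltnP => // H.
by rewrite nth_default ?s'0 ?mul0r // (leq_trans H).
Qed.
Lemma Ly2c v i : (Lyf v).2`_i = if i is j.+1 then s' (v.2`_j) else s' (v.1`_0).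
Proof.
rewrite coef_poly; case: ltnP => // H; case: i H => [|j] //= H.
by rewrite nth_default ?s'0.
Qed.

Lemma MtP (u v : Mt D) : (forall i, u.1`_i = v.1`_i) -> (forall i, u.2`_i = v.2`_i) -> u = v.
Proof. by case: u v => [p q] [p' q'] /= H1 H2; congr pair; apply/polyP. Qed.
Lemma ks1c c (v : Mt D) i : (ks c v).1`_i = c *: v.1`_i.
Proof. by rewrite coefCM -scalerAl mul1r. Qed.
Lemma ks2c c (v : Mt D) i : (ks c v).2`_i = c *: v.2`_i.
Proof. by rewrite coefCM -scalerAl mul1r. Qed.
Lemma Mt1D (u v : Mt D) i : (u + v).1`_i = u.1`_i + v.1`_i. Proof. by rewrite coefD. Qed.
Lemma Mt2D (u v : Mt D) i : (u + v).2`_i = u.2`_i + v.2`_i. Proof. by rewrite coefD. Qed.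

Definition eLd (d : D) : endo D.
Proof.
refine (@Endo _ _ (Ldf d) _ _).
- by move=> u v; apply: MtP => i; rewrite ?Mt1D ?Mt2D !(Ld1c, Ld2c) ?Mt1D ?Mt2D mulrDr.
- by move=> c u; apply: MtP => i; rewrite ?ks1c ?ks2c !(Ld1c, Ld2c) ?ks1c ?ks2c ?coefCM ?mulr_algl scalerAr.
Defined.
Definition eLx : endo D.
Proof.
refine (@Endo _ _ Lxf _ _).
- move=> u v; apply: MtP => i; rewrite ?Mt1D ?Mt2D ?Lx1c ?Lx2c.
    by case: i => [|i]; rewrite ?Mt1D ?Mt2D ?mulrDl rmorphD.
  by rewrite Mt2D mulrDl rmorphD.
- move=> c u; apply: MtP => i; rewrite ?ks1c ?ks2c ?Lx1c ?Lx2c.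
    by case: i => [|i]; rewrite ?ks1c ?ks2c -?scalerAl linearZ.
  by rewrite ks2c -scalerAl linearZ.
Defined.
Definition eLy : endo D.
Proof.
refine (@Endo _ _ Lyf _ _).
- move=> u v; apply: MtP => i; rewrite ?Mt1D ?Mt2D ?Ly1c ?Ly2c.
    by rewrite Mt1D s'D mulrDl.
  by case: i => [|i]; rewrite ?Mt1D ?Mt2D s'D.
- move=> c u; apply: MtP => i; rewrite ?ks1c ?ks2c ?Ly1c ?Ly2c.
    by rewrite ks1c s'Z scalerAl.
  by case: i => [|i]; rewrite ?ks1c ?ks2c s'Z.
Defined.

Lemma eLdE d v : eLd d v = Ldf d v. Proof. by []. Qed.
Lemma eLxE v : eLx v = Lxf v. Proof. by []. Qed.
Lemma eLyE v : eLy v = Lyf v. Proof. by []. Qed.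

Lemma eLd_zmod : zmod_morphism eLd.
Proof.
move=> u v; apply: endoP => w; apply: MtP => i /=;
by rewrite coefB !coefCM mulrBl.
Qed.
Lemma eLd_monoid : monoid_morphism eLd.
Proof.
split.
  by apply: endoP => w; apply: MtP => i /=; rewrite coefCM mul1r.
by move=> u v; apply: endoP => w; apply: MtP => i /=; rewrite !coefCM mulrA.
Qed.
Lemma eLd_scalable : scalable eLd.
Proof.
move=> c u; apply: endoP => w; apply: MtP => i /=;
by rewrite !coefCM -!scalerAl mul1r.
Qed.
Definition eLdL : {lrmorphism D -> endo D} :=
  HB.pack eLd (GRing.isZmodMorphism.Build _ _ _ eLd_zmod)
    (GRing.isMonoidMorphism.Build _ _ _ eLd_monoid)
    (GRing.isScalable.Build _ _ _ _ _ eLd_scalable).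

Ltac nrm := rewrite ?(Lx1c, Lx2c, Ly1c, Ly2c, Ld1c, Ld2c) /= ?(Lx1c, Lx2c, Ly1c, Ly2c, Ld1c, Ld2c) /= ?(Lx1c, Lx2c, Ly1c, Ly2c, Ld1c, Ld2c).
Lemma model_rel : gwa_relations eLdL s s' a eLx eLy.
Proof.
split.
- move=> d; apply: endoP => w; rewrite !endoME /=; apply: MtP => [[|i]|i]; nrm.
  all: try by rewrite !rmorphM ?mulrA.
- move=> d; apply: endoP => w; rewrite !endoME /=; apply: MtP => [i|[|i]]; nrm.
  all: try by rewrite !s'M ?mulrA.
- apply: endoP => w; rewrite !endoME /=; apply: MtP => [i|[|i]]; nrm.
  all: try by rewrite Hs1 Ha.
- apply: endoP => w; rewrite !endoME /=; apply: MtP => [[|i]|i]; nrm.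
  all: by rewrite sa_c rmorphM; congr (_ * _); apply: Hs2.
Qed.

Variables (A : algType k) (iota : {lrmorphism D -> A}) (x y : A)
  (HA : is_GWA iota s s' a x y).

Definition Phi1 (p : {poly D}) n := \sum_(i < n) iota p`_i * x ^+ i.
Definition Phi2 (q : {poly D}) n := \sum_(i < n) iota q`_i * y ^+ i.+1.
Definition Phi (v : Mt D) := Phi1 v.1 (size v.1) + Phi2 v.2 (size v.2).

Lemma sum_widen (F : nat -> A) m n : (m <= n)%N -> (forall i, (m <= i)%N -> F i = 0) ->
  \sum_(i < m) F i = \sum_(i < n) F i.
Proof.
move=> mn HF; rewrite (big_ord_widen n F mn) big_mkcond; apply: eq_bigr => i _.
by case: ifP => // /negbT; rewrite -leqNgt => /HF ->.
Qed.

Lemma Phi1E (p : {poly D}) n : (size p <= n)%N -> Phi1 p (size p) = Phi1 p n.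
Proof. by move=> H; rewrite /Phi1 /Phi2; apply: (@sum_widen (fun i => iota p`_i * x ^+ i)) => // i Hi; rewrite nth_default // raddf0 mul0r. Qed.
Lemma Phi2E (p : {poly D}) n : (size p <= n)%N -> Phi2 p (size p) = Phi2 p n.
Proof. by move=> H; rewrite /Phi1 /Phi2; apply: (@sum_widen (fun i => iota p`_i * y ^+ i.+1)) => // i Hi; rewrite nth_default // raddf0 mul0r. Qed.
Lemma PhiE (v : Mt D) n1 n2 : (size v.1 <= n1)%N -> (size v.2 <= n2)%N -> Phi v = Phi1 v.1 n1 + Phi2 v.2 n2.
Proof. by move=> H1 H2; rewrite /Phi (Phi1E H1) (Phi2E H2). Qed.

Lemma Phi1D (p q : {poly D}) n : Phi1 (p + q) n = Phi1 p n + Phi1 q n.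
Proof. by rewrite /Phi1 -big_split; apply: eq_bigr => i _; rewrite coefD rmorphD mulrDl. Qed.
Lemma Phi2D (p q : {poly D}) n : Phi2 (p + q) n = Phi2 p n + Phi2 q n.
Proof. by rewrite /Phi2 -big_split; apply: eq_bigr => i _; rewrite coefD rmorphD mulrDl. Qed.

Lemma PhiD (u v : Mt D) : Phi (u + v) = Phi u + Phi v.
Proof.
pose N := (size u.1 + size v.1 + size u.2 + size v.2)%N.
have Hz1 : (size ((u + v)%R).1 <= N)%N by have := size_polyD u.1 v.1; rewrite /N /=; lia.
have Hz2 : (size ((u + v)%R).2 <= N)%N by have := size_polyD u.2 v.2; rewrite /N /=; lia.
rewrite (PhiE Hz1 Hz2) (@PhiE u N N) ?(@PhiE v N N) /N; try lia.
by rewrite /= Phi1D Phi2D addrACA.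
Qed.

Lemma PhiZ c (v : Mt D) : Phi (ks c v) = c *: Phi v.
Proof.
pose N := (size v.1 + size v.2 + size (ks c v).1 + size (ks c v).2)%N.
rewrite (@PhiE (ks c v) N N) ?(@PhiE v N N) /N; try lia.
rewrite scalerDr /Phi1 /Phi2 !scaler_sumr; congr (_ + _); apply: eq_bigr => i _.
  by rewrite ks1c linearZ scalerAl.
by rewrite ks2c linearZ scalerAl.
Qed.

Lemma Phi_Ld d (v : Mt D) : Phi (Ldf d v) = iota d * Phi v.
Proof.
pose N := (size v.1 + size v.2 + size (Ldf d v).1 + size (Ldf d v).2)%N.
rewrite (@PhiE (Ldf d v) N N) ?(@PhiE v N N) /N; try lia.
rewrite mulrDr /Phi1 /Phi2 !mulr_sumr; congr (_ + _); apply: eq_bigr => i _.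
  by rewrite Ld1c rmorphM mulrA.
by rewrite Ld2c rmorphM mulrA.
Qed.

Lemma gR1 d : x * iota d = iota (s d) * x. Proof. by case: HA => [[]]. Qed.
Lemma gR2 d : y * iota d = iota (s' d) * y. Proof. by case: HA => [[]]. Qed.
Lemma gR3 : y * x = iota a. Proof. by case: HA => [[]]. Qed.
Lemma gR4 : x * y = iota (s a). Proof. by case: HA => [[]]. Qed.

Lemma Phi_Lx (v : Mt D) : Phi (Lxf v) = x * Phi v.
Proof.
pose N := (size v.1 + size v.2 + size (Lxf v).1 + size (Lxf v).2)%N.
rewrite (@PhiE (Lxf v) N.+1 N) ?(@PhiE v N N.+1); try (rewrite /N; lia).
rewrite mulrDr /Phi1 /Phi2 !mulr_sumr.
have T1 i : x * (iota v.1`_i * x ^+ i) = iota (s v.1`_i) * x ^+ i.+1.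
  by rewrite mulrA gR1 -mulrA -exprS.
have T2 i : x * (iota v.2`_i * y ^+ i.+1) = iota (s (v.2`_i * a)) * y ^+ i.
  by rewrite exprS !mulrA gR1 -(mulrA _ x y) gR4 -!rmorphM.
have S1 : \sum_(i < N) x * (iota v.1`_i * x ^+ i) = \sum_(i < N) iota (s v.1`_i) * x ^+ i.+1.
  by apply: eq_bigr => i _; exact: T1.
have S2 : \sum_(i < N.+1) x * (iota v.2`_i * y ^+ i.+1) =
   iota (s (v.2`_0 * a)) + \sum_(i < N) iota (s (v.2`_i.+1 * a)) * y ^+ i.+1.
  rewrite big_ord_recl T2 expr0 mulr1; congr (_ + _).
  by apply: eq_bigr => i _; rewrite lift0 T2.
have S3 : \sum_(i < N.+1) iota (Lxf v).1`_i * x ^+ i =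
   iota (s (v.2`_0 * a)) + \sum_(i < N) iota (s v.1`_i) * x ^+ i.+1.
  rewrite big_ord_recl Lx1c expr0 mulr1; congr (_ + _).
  by apply: eq_bigr => i _; rewrite lift0 Lx1c.
have S4 : \sum_(i < N) iota (Lxf v).2`_i * y ^+ i.+1 =
   \sum_(i < N) iota (s (v.2`_i.+1 * a)) * y ^+ i.+1.
  by apply: eq_bigr => i _; rewrite Lx2c.
rewrite S1 S2 S3 S4.
by rewrite addrCA addrA.
Qed.

Lemma Phi_Ly (v : Mt D) : Phi (Lyf v) = y * Phi v.
Proof.
pose N := (size v.1 + size v.2 + size (Lyf v).1 + size (Lyf v).2)%N.
rewrite (@PhiE (Lyf v) N N.+1) ?(@PhiE v N.+1 N); try (rewrite /N; lia).
rewrite mulrDr /Phi1 /Phi2 !mulr_sumr.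
have T1 i : y * (iota v.1`_i.+1 * x ^+ i.+1) = iota (s' v.1`_i.+1 * a) * x ^+ i.
  by rewrite exprS !mulrA gR2 -(mulrA _ y x) gR3 -rmorphM.
have T2 i : y * (iota v.2`_i * y ^+ i.+1) = iota (s' v.2`_i) * y ^+ i.+2.
  by rewrite mulrA gR2 -mulrA -exprS.
have S1 : \sum_(i < N) iota (Lyf v).1`_i * x ^+ i =
          \sum_(i < N) iota (s' v.1`_i.+1 * a) * x ^+ i.
  by apply: eq_bigr => i _; rewrite Ly1c.
have S2 : \sum_(i < N.+1) iota (Lyf v).2`_i * y ^+ i.+1 =
    iota (s' v.1`_0) * y + \sum_(i < N) iota (s' v.2`_i) * y ^+ i.+2.
  rewrite big_ord_recl Ly2c expr1; congr (_ + _).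
  by apply: eq_bigr => i _; rewrite lift0 Ly2c.
have S3 : \sum_(i < N.+1) y * (iota v.1`_i * x ^+ i) =
    iota (s' v.1`_0) * y + \sum_(i < N) iota (s' v.1`_i.+1 * a) * x ^+ i.
  rewrite big_ord_recl expr0 mulr1 gR2; congr (_ + _).
  by apply: eq_bigr => i _; rewrite lift0 T1.
have S4 : \sum_(i < N) y * (iota v.2`_i * y ^+ i.+1) =
          \sum_(i < N) iota (s' v.2`_i) * y ^+ i.+2.
  by apply: eq_bigr => i _; rewrite T2.
rewrite S1 S2 S3 S4.
by rewrite addrCA addrA.
Qed.

Lemma rho_ex : exists rho : {lrmorphism A -> endo D},
  [/\ forall d, rho (iota d) = eLd d, rho x = eLx & rho y = eLy].
Proof.
have [_ U] := HA.
have [rho [r1 r2 r3 _]] := U _ eLdL eLx eLy model_rel.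
by exists rho.
Qed.

Section Rho.
Variables (rho : {lrmorphism A -> endo D}) (Hr1 : forall d, rho (iota d) = eLd d)
  (Hr2 : rho x = eLx) (Hr3 : rho y = eLy).

Lemma Phi_rho w (v : Mt D) : Phi (rho w v) = w * Phi v.
Proof.
have G := gwa_gen HA w; rewrite /gen_subalg in G.
move: v; apply: (G (fun w => forall v : Mt D, Phi (rho w v) = w * Phi v)).
  split.
  - by move=> v; rewrite rmorph1 mul1r.
  - by move=> u u' Hu Hu' v; rewrite rmorphD endoDE PhiD Hu Hu' mulrDl.
  - by move=> u u' Hu Hu' v; rewrite rmorphM endoME Hu Hu' mulrA.
  - by move=> c u Hu v; rewrite linearZ endoZE PhiZ Hu scalerAl.
move=> g [[d ->]|[->|->]] v.
- by rewrite Hr1 eLdE Phi_Ld.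
- by rewrite Hr2 eLxE Phi_Lx.
- by rewrite Hr3 eLyE Phi_Ly.
Qed.

Definition e0v : Mt D := (1%:P, 0).
Lemma Phi_e0 : Phi e0v = 1.
Proof.
rewrite /Phi /e0v /= size_polyC oner_neq0 size_poly0 /Phi1 /Phi2 big_ord1 big_ord0.
by rewrite coefC /= rmorph1 mul1r expr0 addr0.
Qed.

Lemma Phi_surj w : w = Phi (rho w e0v).
Proof. by rewrite Phi_rho Phi_e0 mulr1. Qed.

Ltac clo := rewrite ?coef0 ?coefC ?coefXn /= ?s'0 ?s'1 ?mul0r ?raddf0 ?rmorph1 ?s'nat ?eqSS //.
Lemma eLx_pow n : (eLx ^+ n) e0v = ('X^n, 0).
Proof.
elim: n => [|n IH]; first by rewrite expr0 /e0v /= polyC1.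
rewrite exprS endoME IH eLxE; apply: MtP => [[|i]|i]; rewrite ?Lx1c ?Lx2c /=; clo.
by case: (i == n); rewrite ?rmorph1 ?raddf0.
Qed.

Lemma eLy_pow n : (eLy ^+ n.+1) e0v = (0, 'X^n).
Proof.
elim: n => [|n IH].
  by rewrite expr1 eLyE; apply: MtP => [i|[|i]]; rewrite ?Ly1c ?Ly2c /=; clo.
rewrite exprS endoME IH eLyE; apply: MtP => [i|[|i]]; rewrite ?Ly1c ?Ly2c /=; clo.
Qed.

Lemma rho_xn d n : rho (iota d * x ^+ n) e0v = (d%:P * 'X^n, 0).
Proof.
have -> : rho (iota d * x ^+ n) = eLd d * eLx ^+ n by rewrite rmorphM rmorphXn -Hr1 -Hr2.
rewrite endoME eLx_pow eLdE /Ldf /=.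
by rewrite mulr0.
Qed.

Lemma rho_yn d n : rho (iota d * y ^+ n.+1) e0v = (0, d%:P * 'X^n).
Proof.
have -> : rho (iota d * y ^+ n.+1) = eLd d * eLy ^+ n.+1 by rewrite rmorphM rmorphXn -Hr1 -Hr3.
rewrite endoME eLy_pow eLdE /Ldf /=.
by rewrite mulr0.
Qed.
End Rho.
End Model.


Section GKan.
Variable R : realType.

Lemma esup_le_ev (u w : (\bar R)^nat) N :
  (forall n, (N <= n)%N -> (u n <= w n)%E) -> (limn_esup u <= limn_esup w)%E.
Proof.
move=> H; rewrite !limn_esup_lim; apply: lee_lim; [exact: is_cvg_esups|exact: is_cvg_esups|].
exists N => // n /= Nn.
apply: ge_ereal_sup => _ [j /= jn <-].
apply: (@le_trans _ _ (w j)); first by apply: H; apply: leq_trans jn.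
by apply: ereal_sup_ubound; exists j.
Qed.

Lemma esup_shift (v : (\bar R)^nat) (e : R) :
  limn_esup (fun n => (e%:E + v n)%E) = (e%:E + limn_esup v)%E.
Proof.
have E u : limn_esup u = (- limn_einf (-%E \o u))%E by rewrite limn_einfN oppeK.
rewrite E.
have -> : (-%E \o (fun n => e%:E + v n) = fun n => (- e)%:E + (-%E \o v) n)%E.
  by apply: funext => n /=; rewrite oppeD.
by rewrite limn_einf_shift // limn_einfN oppeD // EFinN !oppeK.
Qed.

Lemma GK_cmp (g h : nat -> nat) (K : nat) : (2 <= K)%N -> (forall n, (1 <= h n)%N) ->
  (forall n, (g n <= K * h n)%N) ->
  (limn_esup (fun n => ((ln (g n)%:R / ln n%:R : R)%:E)) <=
   limn_esup (fun n => ((ln (h n)%:R / ln n%:R : R)%:E)))%E.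
Proof.
move=> K2 h1 gh; apply/lee_addgt0Pr => e e0.
rewrite addeC -esup_shift.
pose j := (Num.truncn e^-1).+1.
have ej : 1 < e * j%:R.
  have := truncnS_gt e^-1; rewrite -/j => H.
  by rewrite -ltr_pdivrMl // mulr1.
have lK : 0 < ln (K%:R : R) by apply: ln_gt0; rewrite ltr1n.
apply: (@esup_le_ev _ _ (K ^ j)) => n Hn; rewrite lee_fin.
have n2 : (2 <= n)%N.
  by apply: leq_trans Hn; apply: (leq_trans K2); rewrite -{1}(expn1 K) leq_pexp2l ?(leq_trans _ K2).
have lnn : 0 < ln (n%:R : R) by apply: ln_gt0; rewrite ltr1n.
have lnKj : ln (K%:R : R) *+ j <= ln (n%:R : R).
  rewrite -lnXn ?ltr0n; last lia.
  rewrite ler_ln ?posrE -?natrX ?ltr0n ?expn_gt0 ?ler_nat //; try lia.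
have T1 : ln (K%:R : R) / ln (n%:R) <= e.
  rewrite ler_pdivrMr //; apply: (le_trans _ (ler_wpM2l (ltW e0) lnKj)).
  rewrite -[_ *+ j]mulr_natr.
  have P : 0 < ln (K%:R : R) * (e * j%:R - 1) by apply: mulr_gt0 => //; rewrite subr_gt0.
  nra.
have T2 : ln (g n)%:R <= ln (K%:R : R) + ln (h n)%:R.
  have hp : 0 < (h n)%:R :> R by rewrite ltr0n h1.
  case: (posnP (g n)) => g0.
    rewrite g0 ln0 // addr_ge0 // ?ln_ge0 // ?ler1n ?h1 //; lia.
  rewrite -lnM ?posrE ?ltr0n //; last lia.
  rewrite ler_ln ?posrE -?natrM ?ltr0n ?ler_nat ?gh // muln_gt0 h1 andbT; lia.
have lninv : 0 <= (ln (n%:R : R))^-1 by rewrite invr_ge0 ltW.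
apply: (le_trans (ler_wpM2r lninv T2)).
by rewrite mulrDl lerD2r.
Qed.
End GKan.


Section Span.
Variables (k : fieldType) (A : algType k).
Implicit Types (s t : seq A) (z u v : A).

Lemma sp0 s : spanned s 0.
Proof. by exists (fun _ => 0); rewrite big1 // => i _; rewrite scale0r. Qed.
Lemma spD s u v : spanned s u -> spanned s v -> spanned s (u + v).
Proof.
move=> [c1 ->] [c2 ->]; exists (fun i => c1 i + c2 i).
by rewrite -big_split; apply: eq_bigr => i _; rewrite scalerDl.
Qed.
Lemma spZ s c u : spanned s u -> spanned s (c *: u).
Proof.
move=> [c1 ->]; exists (fun i => c * c1 i).
by rewrite scaler_sumr; apply: eq_bigr => i _; rewrite scalerA.
Qed.
Lemma spB s u v : spanned s u -> spanned s v -> spanned s (u - v).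
Proof. by move=> Hu Hv; apply: spD => //; rewrite -scaleN1r; apply: spZ. Qed.
Lemma spI s (i : 'I_(size s)) : spanned s s`_i.
Proof.
exists (fun j => if j == i then 1 else 0).
rewrite (bigD1 i) //= eqxx scale1r big1 ?addr0 // => j ji.
by rewrite ifN // scale0r.
Qed.
Lemma spM s v : v \in s -> spanned s v.
Proof. by move=> vs; rewrite -(nth_index 0 vs); apply: (spI (Ordinal _)); rewrite index_mem. Qed.
Lemma sp_sum s (I : Type) (r : seq I) (F : I -> A) :
  (forall i, spanned s (F i)) -> spanned s (\sum_(i <- r) F i).
Proof.
elim: r => [|i r IH] H; first by rewrite big_nil; apply: sp0.
by rewrite big_cons; apply: spD; [apply: H | apply: IH].
Qed.
Lemma sp_lin s t (g : A -> A) z :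
  (forall u v, g (u + v) = g u + g v) -> (forall c u, g (c *: u) = c *: g u) ->
  (forall v, v \in s -> spanned t (g v)) -> spanned s z -> spanned t (g z).
Proof.
move=> gD gZ H [c ->].
have g0 : g 0 = 0 by have := gZ 0 0; rewrite !scale0r.
have -> : g (\sum_(i < size s) c i *: s`_i) = \sum_(i < size s) g (c i *: s`_i).
  by rewrite (big_morph g gD g0).
apply: sp_sum => i; rewrite gZ; apply: spZ; apply: H.
exact: mem_nth.
Qed.
Lemma sp_trans s t z : (forall v, v \in s -> spanned t v) -> spanned s z -> spanned t z.
Proof. by move=> H Hz; apply: (@sp_lin s t id z). Qed.
Lemma sp_catl s t z : spanned s z -> spanned (s ++ t) z.
Proof. by apply: sp_trans => v vs; apply: spM; rewrite mem_cat vs. Qed.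
Lemma sp_catr s t z : spanned t z -> spanned (s ++ t) z.
Proof. by apply: sp_trans => v vs; apply: spM; rewrite mem_cat vs orbT. Qed.
Lemma sp_nil z : spanned [::] z -> z = 0.
Proof. by move=> [c ->]; rewrite big_ord0. Qed.
Lemma sp_cons u t v : spanned (u :: t) v -> exists c, spanned t (v - c *: u).
Proof.
move=> [c ->]; exists (c ord0); rewrite big_ord_recl /= addrAC subrr add0r.
by exists (fun i => c (lift ord0 i)).
Qed.

Lemma span_small t : forall s, (forall v, v \in s -> spanned t v) ->
  exists t', (size t' <= size t)%N /\ forall z, spanned s z <-> spanned t' z.
Proof.
elim: t => [|u t1 IH] s Hs.
  exists [::]; split => // z; split; last by move=> /sp_nil ->; apply: sp0.
  move=> Hz; have -> : z = 0; last by apply: sp0.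
  by apply: sp_nil; apply: sp_trans Hz.
case: (pselect (forall v, v \in s -> spanned t1 v)) => [H1|].
  by have [t' [st' Et']] := IH s H1; exists t'; split => //; apply: leq_trans st' _.
move=> /existsNP [v0 /not_implyP [v0s nv0]].
have /choice [phi Hphi] : forall v, exists c : k,
    spanned (u :: t1) v -> spanned t1 (v - c *: u).
  move=> v; case: (pselect (spanned (u :: t1) v)) => [/sp_cons [c Hc]|nv]; first by exists c.
  by exists 0.
set c0 := phi v0.
have r0 := Hphi v0 (Hs v0 v0s).
have c0n : c0 != 0.
  by apply/eqP => c00; apply: nv0; move: r0; rewrite -/c0 c00 scale0r subr0.
pose s' := [seq v - (phi v / c0) *: v0 | v <- s].
have Hs' : forall w, w \in s' -> spanned t1 w.
  move=> w /mapP [v vs ->].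
  have -> : v - (phi v / c0) *: v0 = (v - phi v *: u) - (phi v / c0) *: (v0 - c0 *: u).
    by rewrite scalerBr scalerA divfK // opprB addrA subrK.
  by apply: spB; [apply: Hphi; apply: Hs | apply: spZ].
have [t'' [st'' Et'']] := IH s' Hs'.
exists (v0 :: t''); split => // z; split => Hz.
  apply: sp_trans Hz => v vs.
  have -> : v = (v - (phi v / c0) *: v0) + (phi v / c0) *: v0 by rewrite subrK.
  apply: spD.
    have : spanned s' (v - (phi v / c0) *: v0) by apply: spM; apply/mapP; exists v.
    by move/(proj1 (Et'' _)); rewrite -cat1s; apply: sp_catr.
  by apply: spZ; apply: spM; rewrite inE eqxx.
apply: sp_trans Hz => w; rewrite inE => /orP [/eqP ->|wt]; first by apply: spM.
have : spanned s' w by apply: (proj2 (Et'' w)); apply: spM.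
apply: sp_trans => w' /mapP [v vs ->].
by apply: spB; [apply: spM | apply: spZ; apply: spM].
Qed.

Lemma fdimP s : exists t, size t = fdim s /\ forall z, spanned s z <-> spanned t z.
Proof. by rewrite /fdim; case: ex_minnP => n /asboolP [t [st Et]] _; exists t. Qed.
Lemma fdim_min s t : (forall z, spanned s z <-> spanned t z) -> (fdim s <= size t)%N.
Proof.
move=> Et; rewrite /fdim; case: ex_minnP => n _; apply.
by apply/asboolP; exists t.
Qed.
Lemma fdim_size s : (fdim s <= size s)%N.
Proof. exact: fdim_min. Qed.
Lemma fdim_mono s t : (forall v, v \in s -> spanned t v) -> (fdim s <= fdim t)%N.
Proof.
move=> H; have [t0 [st0 Et0]] := fdimP t.
have [t' [st' Et']] : exists t', (size t' <= size t0)%N /\ forall z, spanned s z <-> spanned t' z.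
  by apply: span_small => v vs; apply: (proj1 (Et0 v)); apply: H.
by apply: leq_trans (fdim_min Et') _; rewrite -st0.
Qed.
Lemma fdim_cat s1 s2 : (fdim (s1 ++ s2) <= fdim s1 + fdim s2)%N.
Proof.
have [t1 [st1 Et1]] := fdimP s1; have [t2 [st2 Et2]] := fdimP s2.
apply: leq_trans (fdim_mono (t := t1 ++ t2) _) _.
  move=> v; rewrite mem_cat => /orP [vs|vs].
    by apply: sp_catl; apply: (proj1 (Et1 v)); apply: spM.
  by apply: sp_catr; apply: (proj1 (Et2 v)); apply: spM.
by apply: leq_trans (fdim_size _) _; rewrite size_cat st1 st2.
Qed.
Lemma fdim_map s (g : A -> A) :
  (forall u v, g (u + v) = g u + g v) -> (forall c u, g (c *: u) = c *: g u) ->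
  (fdim (map g s) <= fdim s)%N.
Proof.
move=> gD gZ; have [t [st Et]] := fdimP s.
apply: leq_trans (fdim_mono (t := map g t) _) _.
  move=> w /mapP [v vs ->]; apply: (sp_lin gD gZ); last by apply: (proj1 (Et v)); apply: spM.
  by move=> v' v't; apply: spM; apply: map_f.
by apply: leq_trans (fdim_size _) _; rewrite size_map st.
Qed.
Lemma fdim_flatten (ss : seq (seq A)) M : (forall s, s \in ss -> (fdim s <= M)%N) ->
  (fdim (flatten ss) <= size ss * M)%N.
Proof.
elim: ss => [|s ss IH] H /=; first by rewrite (leq_trans (fdim_size _)).
apply: leq_trans (fdim_cat _ _) _; rewrite mulSn leq_add //.
  by apply: H; rewrite inE eqxx.
by apply: IH => s' s'ss; apply: H; rewrite inE s'ss orbT.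
Qed.
Lemma fdim_pos s : spanned s 1 -> (0 < fdim s)%N.
Proof.
move=> H1; have [t [st Et]] := fdimP s; rewrite -st.
case: t st Et => // _ Et; have /sp_nil /eqP := (proj1 (Et 1) H1).
by rewrite oner_eq0.
Qed.
End Span.


Section Pow.
Variables (k : fieldType) (A : algType k).
Implicit Types (vs W zs : seq A).

Lemma words_cons vs i w : w \in words vs i.+1 ->
  exists v w', [/\ v \in vs, w' \in words vs i & w = v :: w'].
Proof. by move=> /allpairsP [[v w'] /= [vvs w'w ->]]; exists v, w'. Qed.
Lemma words_consI vs i v w' : v \in vs -> w' \in words vs i -> v :: w' \in words vs i.+1.
Proof. by move=> vv ww; apply: (allpairs_f (fun v w => v :: w)). Qed.
Lemma words0 vs w : w \in words vs 0 -> w = [::].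
Proof. by rewrite inE => /eqP. Qed.
Lemma powfam_mem vs n i w : (i <= n)%N -> w \in words vs i -> foldr *%R 1 w \in powfam vs n.
Proof.
move=> ni ww; apply: map_f; apply/flattenP; exists (words vs i) => //.
by apply: map_f; rewrite mem_iota; lia.
Qed.
Lemma powfam_inv vs n z : z \in powfam vs n ->
  exists i w, [/\ (i <= n)%N, w \in words vs i & z = foldr *%R 1 w].
Proof.
move=> /mapP [w /flattenP [ws /mapP [i]]]; rewrite mem_iota => Hi -> ww ->.
by exists i, w; split => //; lia.
Qed.
Lemma one_powfam vs n : (1 : A) \in powfam vs n.
Proof. by apply: (@powfam_mem vs n 0 [::]) => //; rewrite inE. Qed.

Lemma growth_pos vs n : (0 < growth vs n)%N.
Proof. by apply: fdim_pos; apply: spM; apply: one_powfam. Qed.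

Lemma growth_bound zs W vs : (1 : A) \in zs ->
  (forall v z, v \in vs -> z \in zs -> spanned [seq z' * w | z' <- zs, w <- W] (v * z)) ->
  forall n, (growth vs n <= size zs * growth W n)%N.
Proof.
move=> z1 Hvz n.
pose L i := [seq z * foldr *%R 1 u | z <- zs, u <- words W i].
have key : forall i w, w \in words vs i -> spanned (L i) (foldr *%R 1 w).
  elim=> [|i IH] w.
    move/words0 ->; apply: spM; rewrite /L.
    have E : (1 : A) = 1 * foldr *%R 1 [::] by rewrite mul1r.
    rewrite {1}E.
    by apply: (allpairs_f (fun z u => z * foldr *%R 1 u)) => //; rewrite inE.
  move=> /words_cons [v [w' [vvs w'w ->]]] /=.
  apply: (sp_lin (g := fun t => v * t)) (IH w' w'w).
  - by move=> u u'; rewrite mulrDr.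
  - by move=> c u; rewrite scalerAr.
  move=> t /allpairsP [[z u] /= [zzs uw ->]].
  rewrite mulrA.
  apply: (sp_lin (g := fun t => t * foldr *%R 1 u)) (Hvz v z vvs zzs).
  - by move=> u1 u2; rewrite mulrDl.
  - by move=> c u1; rewrite scalerAl.
  move=> t' /allpairsP [[z' w0] /= [z'zs w0W ->]].
  apply: spM; rewrite -mulrA.
  have -> : w0 * foldr *%R 1 u = foldr *%R 1 (w0 :: u) by [].
  apply: (allpairs_f (fun z u => z * foldr *%R 1 u)) => //.
  exact: words_consI.
have Hsub : forall t, t \in powfam vs n ->
    spanned (flatten [seq [seq z * p | p <- powfam W n] | z <- zs]) t.
  move=> t /powfam_inv [i [w [ni ww ->]]].
  apply: sp_trans (key i w ww) => t' /allpairsP [[z u] /= [zzs uw ->]].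
  apply: spM; apply/flattenP; exists [seq z * p | p <- powfam W n]; first exact: map_f.
  by apply: map_f; apply: powfam_mem ni uw.
rewrite /growth; apply: leq_trans (fdim_mono Hsub) _.
rewrite -(size_map (fun z => [seq z * p | p <- powfam W n]) zs).
apply: fdim_flatten => s' /mapP [z _ ->]; apply: fdim_map.
- by move=> u u'; rewrite mulrDr.
- by move=> c u; rewrite scalerAr.
Qed.
End Pow.

Section Iter.
Variables (k : fieldType) (D : algType k) (s : {lrmorphism D -> D}) (s' : D -> D)
  (Hs1 : cancel s s') (Hs2 : cancel s' s) (a : D) (Ha : forall d, a * d = d * a).

Lemma iter_can n d : iter n s (iter n s' d) = d.
Proof. by elim: n => // n IH; rewrite iterSr iterS Hs2 IH. Qed.
Lemma iter_can' n d : iter n s' (iter n s d) = d.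
Proof. by elim: n => // n IH; rewrite iterSr iterS Hs1 IH. Qed.

Lemma iter_zmod n : zmod_morphism (iter n s).
Proof. by elim: n => // n IH u v; rewrite !iterS IH raddfB. Qed.
Lemma iter_monoid n : monoid_morphism (iter n s).
Proof.
elim: n => // n [IH1 IH2]; split; first by rewrite iterS IH1 rmorph1.
by move=> u v; rewrite !iterS IH2 rmorphM.
Qed.
Lemma iter_scal n : scalable (iter n s).
Proof. by elim: n => // n IH c u; rewrite !iterS IH linearZ. Qed.
Definition iterL n : {lrmorphism D -> D} :=
  HB.pack (iter n s) (GRing.isZmodMorphism.Build _ _ _ (iter_zmod n))
    (GRing.isMonoidMorphism.Build _ _ _ (iter_monoid n))
    (GRing.isScalable.Build _ _ _ _ _ (iter_scal n)).

Definition central (z : D) := forall d, z * d = d * z.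
Lemma central_s' z : central z -> central (s' z).
Proof. by move=> Hz d; rewrite -{1}(Hs1 d) -(s'M Hs1 Hs2) Hz (s'M Hs1 Hs2) Hs1. Qed.
Lemma central_s z : central z -> central (s z).
Proof. by move=> Hz d; rewrite -{1}(Hs2 d) -rmorphM Hz rmorphM; congr (_ * _); apply: Hs2. Qed.
Lemma central_iter' n : central (iter n s' a).
Proof. by elim: n => // n IH; rewrite iterS; apply: central_s'. Qed.
Lemma central_iter n z : central z -> central (iter n s z).
Proof. by move=> Hz; elim: n => // n IH; rewrite iterS; apply: central_s. Qed.

Definition bprod n := \prod_(i < n) iter (n.-1 - i) s' a.
Lemma bprod_central n : central (bprod n).
Proof.
rewrite /bprod; apply: (big_ind central) => //.
- by move=> d; rewrite mul1r mulr1.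
- by move=> u v Hu Hv d; rewrite -mulrA Hv mulrA Hu mulrA.
- by move=> i _; apply: central_iter'.
Qed.
Lemma bprodS n : bprod n.+1 = iter n s' a * bprod n.
Proof.
rewrite /bprod big_ord_recl subn0; congr (_ * _); apply: eq_bigr => i _.
by rewrite lift0 /=; congr (iter _ _ _); lia.
Qed.

Variables (A : algType k) (iota : {lrmorphism D -> A}) (x y : A)
  (HA : is_GWA iota s s' a x y).

Lemma xn_iota n d : x ^+ n * iota d = iota (iter n s d) * x ^+ n.
Proof.
elim: n d => [|n IH] d; first by rewrite expr0 mul1r mulr1.
by rewrite exprS -mulrA IH mulrA (gR1 HA) -mulrA -exprS.
Qed.
Lemma yn_iota n d : y ^+ n * iota d = iota (iter n s' d) * y ^+ n.
Proof.
elim: n d => [|n IH] d; first by rewrite expr0 mul1r mulr1.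
by rewrite exprS -mulrA IH mulrA (gR2 HA) -mulrA -exprS.
Qed.
Lemma yx_n n : y ^+ n * x ^+ n = iota (bprod n).
Proof.
elim: n => [|n IH]; first by rewrite !expr0 mul1r /bprod big_ord0 rmorph1.
rewrite exprSr exprS -mulrA (mulrA y) (gR3 HA) mulrA yn_iota -mulrA IH -rmorphM.
by rewrite bprodS.
Qed.
Lemma xy_n n : x ^+ n * y ^+ n = iota (iter n s (bprod n)).
Proof.
elim: n => [|n IH]; first by rewrite !expr0 mul1r /bprod big_ord0 rmorph1.
rewrite exprS exprSr -mulrA (mulrA (x ^+ n)) IH mulrA (gR1 HA) -mulrA (gR4 HA) -rmorphM.
congr (iota _).
rewrite bprodS (iter_monoid n.+1).2 iterS iter_can iterS.
by rewrite (central_s Ha).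
Qed.
End Iter.


Lemma gen_closed (k : fieldType) (A : algType k) (G : A -> Prop) : Defs.subalg_closed (gen_subalg G).
Proof.
split.
- by move=> S [].
- by move=> u v Hu Hv S HS HG; case: (HS) => _ SD _ _; apply: SD; [apply: Hu|apply: Hv].
- by move=> u v Hu Hv S HS HG; case: (HS) => _ _ SM _; apply: SM; [apply: Hu|apply: Hv].
- by move=> c u Hu S HS HG; case: (HS) => _ _ _ SZ; apply: SZ; apply: Hu.
Qed.
Lemma gen_G (k : fieldType) (A : algType k) (G : A -> Prop) g : G g -> gen_subalg G g.
Proof. by move=> Gg S _ HG; apply: HG. Qed.

Lemma endo_sumE (k : fieldType) (D : algType k) (I : Type) (r : seq I) (F : I -> endo D) v :
  (\sum_(i <- r) F i) v = \sum_(i <- r) F i v.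
Proof. by rewrite (big_morph (fun f : endo D => f v) (fun f g => endoDE f g v) (endo0E v)). Qed.
Lemma fst_sum (R : nzRingType) (I : Type) (r : seq I) (F : I -> ({poly R} * {poly R})%type) :
  (\sum_(i <- r) F i).1 = \sum_(i <- r) (F i).1.
Proof. by rewrite (big_morph fst (fun u v => erefl) erefl). Qed.
Lemma snd_sum (R : nzRingType) (I : Type) (r : seq I) (F : I -> ({poly R} * {poly R})%type) :
  (\sum_(i <- r) F i).2 = \sum_(i <- r) (F i).2.
Proof. by rewrite (big_morph snd (fun u v => erefl) erefl). Qed.

Lemma coef_spread (R : nzRingType) (p : {poly R}) (m c j : nat) : (0 < m)%N ->
  (\sum_(i < size p) (p`_i)%:P * 'X^((m * i + c)%N))`_((m * j + c)%N) = p`_j.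
Proof.
move=> m0; rewrite coef_sum.
have E (i : 'I_(size p)) : ((p`_i)%:P * 'X^((m * i + c)%N))`_((m * j + c)%N) = p`_i * (j == i)%:R.
  by rewrite coefCM coefXn eqn_add2r eqn_pmul2l.
rewrite (eq_bigr _ (fun i _ => E i)).
case: (ltnP j (size p)) => jp.
  rewrite (bigD1 (Ordinal jp)) //= eqxx mulr1 big1 ?addr0 // => i ne.
  have -> : (j == i) = false.
    by apply/negbTE; apply: contra ne => /eqP ji; apply/eqP; apply: val_inj; rewrite /= ji.
  by rewrite mulr0.
rewrite nth_default // big1 // => i _.
have -> : (j == i) = false by apply/negbTE; rewrite neq_ltn (leq_trans (ltn_ord i) jp) orbT.
by rewrite mulr0.
Qed.

Unset Implicit Arguments.
Theorem lemma3p1 (k : fieldType) (D : algType k)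
    (sigma : {lrmorphism D -> D}) (sigmainv : D -> D)
    (Hs1 : cancel sigma sigmainv) (Hs2 : cancel sigmainv sigma)
    (a : D) (Ha : forall d : D, a * d = d * a)
    (A : algType k) (iota : {lrmorphism D -> A}) (x y : A)
    (HA : is_GWA iota sigma sigmainv a x y)
    (m : nat) (Hm : (1 <= m)%N)
    (A' : algType k) (iota' : {lrmorphism D -> A'}) (X Y : A')
    (HA' : is_GWA iota' (iter m sigma) (iter m sigmainv)
             (\prod_(i < m) iter (m.-1 - i) sigmainv a) X Y)
    (R : realType) :
  let b := \prod_(i < m) iter (m.-1 - i) sigmainv a in
  let B := gen_subalg (fun z : A => (exists d, z = iota d) \/ z = x ^+ m \/ z = y ^+ m) in
  [/\ forall d : D, b * d = d * b,
      exists f : {lrmorphism A' -> A},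
        [/\ forall d, f (iota' d) = iota d, f X = x ^+ m, f Y = y ^+ m,
            injective f &
            forall z, B z <-> exists w, f w = z]
    & GKdim R A = GKdim_on R B].
Proof.
move=> b B.
have bc : forall d : D, b * d = d * b by exact: (bprod_central Hs1 Hs2 Ha m).
split => //.
  have [_ U'] := HA'.
  have rel : gwa_relations iota (iter m sigma) (iter m sigmainv) b (x ^+ m) (y ^+ m).
    split; [exact: (xn_iota HA) | exact: (yn_iota HA) | exact: (yx_n HA) | exact: (xy_n Hs2 Ha HA)].
  have [f [f1 f2 f3 _]] := U' A iota (x ^+ m) (y ^+ m) rel.
  exists f; split => //; last first.
    move=> z; split.
      move=> Bz; apply: (Bz (fun z => exists w, f w = z)).
        split.
        - by exists 1; rewrite rmorph1.
        - by move=> u v [w1 <-] [w2 <-]; exists (w1 + w2); rewrite rmorphD.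
        - by move=> u v [w1 <-] [w2 <-]; exists (w1 * w2); rewrite rmorphM.
        - by move=> c u [w1 <-]; exists (c *: w1); rewrite linearZ.
      move=> g [[d ->]|[->|->]]; [by exists (iota' d) | by exists X | by exists Y].
    move=> [w <-].
    have G' := gwa_gen HA' w; rewrite /gen_subalg in G'.
    apply: (G' (fun w => B (f w))).
      have [C1 CD CM CZ] := gen_closed (fun z : A => (exists d, z = iota d) \/ z = x ^+ m \/ z = y ^+ m).
      split.
      - by rewrite rmorph1.
      - by move=> u v Hu Hv; rewrite rmorphD; apply: CD.
      - by move=> u v Hu Hv; rewrite rmorphM; apply: CM.
      - by move=> c u Hu; rewrite linearZ; apply: CZ.
    move=> g [[d ->]|[->|->]]; apply: gen_G.
    - by left; exists d.
    - by right; left.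
    - by right; right.
  pose Sm := iterL sigma m.
  have Hs1' : cancel Sm (iter m sigmainv) by move=> d; exact: (iter_can' Hs1 m d).
  have Hs2' : cancel (iter m sigmainv) Sm by move=> d; exact: (iter_can Hs2 m d).
  have HA'' : is_GWA iota' Sm (iter m sigmainv) b X Y := HA'.
  have [rho' [r1' r2' r3']] := rho_ex Hs1' Hs2' bc HA''.
  have [rho [r1 r2 r3]] := rho_ex Hs1 Hs2 Ha HA.
  move=> u v Huv; apply/eqP; rewrite -subr_eq0; apply/eqP.
  have : f (u - v) = 0 by rewrite raddfB; apply/eqP; rewrite subr_eq0; apply/eqP; exact: Huv.
  move: (u - v) => w fw.
  rewrite (Phi_surj HA'' r1' r2' r3' w) in fw *.
  move: (rho' w (@e0v _ D)) fw => [p q] fw.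
  have E : rho (f (Phi iota' X Y (p, q))) (@e0v _ D) = 0 by rewrite fw rmorph0.
  have Ef : f (Phi iota' X Y (p, q)) =
      \sum_(i < size p) iota p`_i * x ^+ (m * i + 0)%N +
      \sum_(i < size q) iota q`_i * y ^+ (m * i + m.-1)%N.+1.
    rewrite /Phi /Phi1 /Phi2 /= rmorphD !rmorph_sum; congr (_ + _); apply: eq_bigr => i _.
      by rewrite addn0 exprM -f2 -f1 -rmorphXn -rmorphM.
    have -> : ((m * i + m.-1).+1 = m * i.+1)%N by lia.
    by rewrite exprM -f3 -f1 -rmorphXn -rmorphM.
  rewrite Ef rmorphD !rmorph_sum endoDE !endo_sumE in E.
  have S1 : \sum_(i < size p) rho (iota p`_i * x ^+ (m * i + 0)%N) (@e0v _ D) =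
            \sum_(i < size p) ((p`_i)%:P * 'X^((m * i + 0)%N), 0).
    by apply: eq_bigr => i _; exact: (rho_xn r1 r2).
  have S2 : \sum_(i < size q) rho (iota q`_i * y ^+ (m * i + m.-1)%N.+1) (@e0v _ D) =
            \sum_(i < size q) (0, (q`_i)%:P * 'X^((m * i + m.-1)%N)).
    by apply: eq_bigr => i _; exact: (rho_yn r1 r3).
  rewrite S1 S2 in E.
  have E1 := congr1 fst E; have E2 := congr1 snd E.
  rewrite /= !fst_sum /= [X in _ + X]big1 ?addr0 // in E1.
  rewrite /= !snd_sum /= [X in X + _]big1 ?add0r // in E2.
  have p0 : p = 0.
    by apply/polyP => j; rewrite coef0 -(@coef_spread _ p m 0 j Hm) E1 coef0.
  have q0 : q = 0.
    by apply/polyP => j; rewrite coef0 -(@coef_spread _ q m m.-1 j Hm) E2 coef0.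
  by rewrite p0 q0 /Phi /Phi1 /Phi2 /= size_poly0 !big_ord0 addr0.
have [C1 CD CM CZ] := gen_closed (fun z : A => (exists d, z = iota d) \/ z = x ^+ m \/ z = y ^+ m).
have B0 : B 0 by rewrite -(scale0r (1 : A)); apply: CZ.
have Bpow z n : B z -> B (z ^+ n).
  by move=> Bz; elim: n => [|n IH]; [rewrite expr0 | rewrite exprS; apply: CM].
have Bi d : B (iota d) by apply: gen_G; left; exists d.
have Bx : B (x ^+ m) by apply: gen_G; right; left.
have By : B (y ^+ m) by apply: gen_G; right; right.
pose zs := [seq x ^+ r | r <- seq.iota 0 m] ++ [seq y ^+ r | r <- seq.iota 0 m].
have szs : size zs = (m + m)%N by rewrite size_cat !size_map size_iota.
pose RM (w : A) := exists F : nat -> A, (forall j, B (F j)) /\ w = \sum_(j < size zs) zs`_j * F j.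
have RM0 : RM 0 by exists (fun _ => 0); split => //; rewrite big1 // => j _; rewrite mulr0.
have RMD u v : RM u -> RM v -> RM (u + v).
  move=> [F1 [HF1 ->]] [F2 [HF2 ->]]; exists (fun j => F1 j + F2 j); split.
    by move=> j; apply: CD; [apply: HF1 | apply: HF2].
  by rewrite -big_split; apply: eq_bigr => j _; rewrite mulrDr.
have RMz j c : (j < size zs)%N -> B c -> RM (zs`_j * c).
  move=> jz Bc; exists (fun l => if l == j then c else 0); split.
    by move=> l; case: ifP.
  rewrite (bigD1 (Ordinal jz)) //= eqxx big1 ?addr0 // => l ne.
  have -> : (nat_of_ord l == j) = false.
    by apply/negbTE; apply: contra ne => /eqP lj; apply/eqP; apply: val_inj; rewrite /= lj.
  by rewrite mulr0.
have RMsum (I : Type) (r : seq I) (G : I -> A) : (forall i, RM (G i)) -> RM (\sum_(i <- r) G i).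
  by move=> HG; elim: r => [|i r IH]; [rewrite big_nil | rewrite big_cons; apply: RMD].
have [rho [r1 r2 r3]] := rho_ex Hs1 Hs2 Ha HA.
have RMall w : RM w.
  rewrite (Phi_surj HA r1 r2 r3 w) /Phi /Phi1 /Phi2; apply: RMD; apply: RMsum => i.
    set d := _`_i; set n := nat_of_ord i.
    have -> : iota d * x ^+ n = x ^+ (n %% m) * (iota (iter (n %% m) sigmainv d) * (x ^+ m) ^+ (n %/ m)).
      rewrite mulrA (xn_iota HA) (iter_can Hs2) -mulrA -exprM -exprD.
      by rewrite {1}(divn_eq n m) addnC mulnC.
    have -> : x ^+ (n %% m) = zs`_(n %% m).
      by rewrite nth_cat size_map size_iota ltn_pmod // (nth_map 0) ?size_iota ?ltn_pmod // nth_iota ?ltn_pmod.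
    by apply: RMz; [rewrite szs; apply: leq_trans (ltn_pmod _ Hm) _; apply: leq_addr | apply: CM; [apply: Bi | apply: Bpow]].
  set d := _`_i; set n := (nat_of_ord i).+1.
  have -> : iota d * y ^+ n = y ^+ (n %% m) * (iota (iter (n %% m) sigma d) * (y ^+ m) ^+ (n %/ m)).
    rewrite mulrA (yn_iota HA) (iter_can' Hs1) -mulrA -exprM -exprD.
    by rewrite {1}(divn_eq n m) addnC mulnC.
  have -> : y ^+ (n %% m) = zs`_(m + n %% m).
    rewrite nth_cat size_map size_iota ltnNge leq_addr /= addKn.
    by rewrite (nth_map 0) ?size_iota ?ltn_pmod // nth_iota ?ltn_pmod.
  by apply: RMz; [rewrite szs ltn_add2l ltn_pmod | apply: CM; [apply: Bi | apply: Bpow]].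
have /choice [Fch HF] := RMall.
apply/eqP; rewrite eq_le; apply/andP; split; last first.
  by apply: le_ereal_sup => z [vs _ <-]; exists vs.
apply: ge_ereal_sup => _ [vs _ <-].
pose W := 1 :: flatten [seq [seq Fch (v * z) j | j <- seq.iota 0 (size zs)] | v <- vs, z <- zs].
have WB w : w \in W -> B w.
  rewrite inE => /orP [/eqP ->|]; first exact: C1.
  move=> /flattenP [ws /allpairsP [[v z] /= [_ _ ->]]] /mapP [j _ ->].
  by case: (HF (v * z)) => H _; apply: H.
have z1 : (1 : A) \in zs.
  by rewrite mem_cat; apply/orP; left; apply/mapP; exists 0%N; rewrite ?mem_iota ?expr0.
have Hvz v z : v \in vs -> z \in zs -> spanned [seq z' * w | z' <- zs, w <- W] (v * z).
  move=> vv zz; case: (HF (v * z)) => _ ->.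
  apply: sp_sum => j; apply: spM.
  apply: (allpairs_f (fun z' w => z' * w)); first exact: mem_nth.
  rewrite inE; apply/orP; right; apply/flattenP.
  exists [seq Fch (v * z) j0 | j0 <- seq.iota 0 (size zs)]; first exact: (allpairs_f (fun v z => [seq Fch (v * z) j0 | j0 <- seq.iota 0 (size zs)])).
  by apply: map_f; rewrite mem_iota /=.
have gb := growth_bound z1 Hvz.
apply: (le_trans (GK_cmp R _ (@growth_pos _ _ W) gb)).
  by rewrite szs; lia.
by apply: ereal_sup_ubound; exists W => // w; apply: WB.
Qed.
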